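(* Let $a>0$ and $p\in(2,+\infty)$. Let $x\in C^0(\mathbb{R}_+\times[0,1])\cap C^{1,2}((0,\infty)\times(0,1))$, with $x[t]:=x(t,\cdot)\in C^2([0,1])$ for all $t\ge0$, be a classical solution of $\partial_tx(t,z)=a\,\partial_z^2x(t,z)$ on $(0,\infty)\times(0,1)$ with $x(t,0)=x(t,1)=0$ for $t\ge0$ and $x(0,\cdot)=x_0\in C^2([0,1])$. Then for all $t\ge0$, $\|x[t]\|_p\le e^{-a(p-1)\frac{4\pi^2}{p^2}t}\|x_0\|_p$, where $\|g\|_p=\left(\int_0^1|g(z)|^pdz\right)^{1/p}$. *)

(* Defs.v *)
From Stdlib Require Import Reals Lra ClassicalEpsilon.
Open Scope R_scope.

(* Power with a real exponent, with the convention 0^b = 0 (Stdlib's Rpower 0 b = 1). *)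
Definition rpow (a b : R) : R := if Rlt_dec 0 a then Rpower a b else 0.

(* Riemann integral over [0,1] (0 if f is not Riemann integrable). *)
Definition RInt01 (f : R -> R) : R :=
  match excluded_middle_informative (inhabited (Riemann_integrable f 0 1)) with
  | left H => RiemannInt (epsilon H (fun _ => True))
  | right _ => 0
  end.

Definition Lpnorm (g : R -> R) (p : R) : R :=
  rpow (RInt01 (fun z => rpow (Rabs (g z)) p)) (1 / p).

Definition cont2_on (D : R -> R -> Prop) (f : R -> R -> R) : Prop :=
  forall t z, D t z -> forall eps, 0 < eps -> exists delta, 0 < delta /\
    forall s w, D s w -> Rabs (s - t) < delta -> Rabs (w - z) < delta ->
      Rabs (f s w - f t z) < eps.

Definition deriv01 (f : R -> R) (z l : R) : Prop :=
  limit1_in (fun h => (f h - f z) / (h - z)) (fun h => 0 <= h <= 1 /\ h <> z) l z.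

Definition cont01 (f : R -> R) (z : R) : Prop :=
  limit1_in f (fun h => 0 <= h <= 1) (f z) z.

Definition C2_01 (f : R -> R) : Prop :=
  exists f1 f2 : R -> R,
    (forall z, 0 <= z <= 1 -> deriv01 f z (f1 z) /\ deriv01 f1 z (f2 z) /\ cont01 f2 z).

(* Main.v *)
Require Import Defs.
From Coquelicot Require Import Coquelicot.
From Stdlib Require Import Reals Lra Psatz ClassicalEpsilon Classical.
Open Scope R_scope.


Definition Wf (p y : R) : R := rpow (Rabs y) (p - 2).
Definition Vf (p y : R) : R := Wf p y * y.
Definition Pf (p y : R) : R := Vf p y * y.

Lemma rpow_nonneg a b : 0 <= rpow a b.
Proof. unfold rpow; destruct (Rlt_dec 0 a); [unfold Rpower; left; apply exp_pos | lra]. Qed.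

Lemma Wf_nonneg p y : 0 <= Wf p y.
Proof. apply rpow_nonneg. Qed.

Lemma Pf_nonneg p y : 0 <= Pf p y.
Proof. unfold Pf, Vf. pose proof (Wf_nonneg p y). nra. Qed.

Lemma Wf_le1 p y : 2 < p -> Rabs y <= 1 -> Wf p y <= 1.
Proof.
  intros Hp Hy. unfold Wf, rpow. destruct (Rlt_dec 0 (Rabs y)); [|lra].
  unfold Rpower. rewrite <- exp_0. 
  destruct (Rle_lt_or_eq_dec _ _ Hy) as [H|H].
  - left. apply exp_increasing. assert (ln (Rabs y) < 0). { rewrite <- ln_1. apply ln_increasing; lra. } nra.
  - rewrite H, ln_1. right. f_equal. ring.
Qed.

Lemma Pf_le p y : 2 < p -> Rabs y <= 1 -> Pf p y <= y * y.
Proof. intros. unfold Pf, Vf. pose proof (Wf_le1 p y H H0). pose proof (Wf_nonneg p y). nra. Qed.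

Lemma Wf_pos_eq p y : 0 < y -> Wf p y = Rpower y (p-2).
Proof. intros. unfold Wf, rpow. rewrite Rabs_pos_eq by lra. destruct (Rlt_dec 0 y); [auto|lra]. Qed.

Lemma Wf_neg_eq p y : y < 0 -> Wf p y = Rpower (-y) (p-2).
Proof. intros. unfold Wf, rpow. rewrite Rabs_left by lra. destruct (Rlt_dec 0 (-y)); [auto|lra]. Qed.

Lemma Wf_0 p : Wf p 0 = 0.
Proof. unfold Wf, rpow. rewrite Rabs_R0. destruct (Rlt_dec 0 0); [lra|auto]. Qed.

Lemma locally_R (x : R) (P : R -> Prop) :
  (exists e, 0 < e /\ forall z, Rabs (z - x) < e -> P z) -> locally x P.
Proof.
  intros [e [He H]]. exists (mkposreal e He). intros y Hy. apply H. exact Hy.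
Qed.

Lemma Wf_small p : 2 < p -> forall eps, 0 < eps -> exists d, 0 < d /\
  forall h, Rabs h < d -> Wf p h < eps.
Proof.
  intros Hp eps He. exists (exp (ln eps / (p-2))). split; [apply exp_pos|].
  intros h Hh. unfold Wf, rpow. destruct (Rlt_dec 0 (Rabs h)); [|lra].
  unfold Rpower. rewrite <- (exp_ln eps He). apply exp_increasing.
  assert (ln (Rabs h) < ln eps / (p-2)).
  { rewrite <- (ln_exp (ln eps / (p-2))). apply ln_increasing; lra. }
  apply Rmult_lt_compat_l with (r := p-2) in H; [|lra].
  replace ((p-2) * (ln eps / (p-2))) with (ln eps) in H by (field; lra). lra.
Qed.

Lemma ed_cont (f : R -> R) x : ex_derive f x -> continuity_pt f x.
Proof. intros [l H]. apply is_derive_Reals in H. apply derivable_continuous_pt. exists l; exact H. Qed.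

Lemma cont_ext_loc (f g : R -> R) x : (exists e, 0 < e /\ forall z, Rabs (z - x) < e -> f z = g z) ->
  continuity_pt f x -> continuity_pt g x.
Proof.
  intros [e [He Hfg]] Hf eps Heps. destruct (Hf eps Heps) as [d [Hd H]].
  exists (Rmin d e). split. apply Rmin_pos; auto.
  intros z [Hz1 Hz2]. simpl in *. unfold R_dist in *.
  pose proof (Rmin_l d e). pose proof (Rmin_r d e).
  rewrite <- (Hfg z) by lra. rewrite <- (Hfg x) by (rewrite Rminus_diag, Rabs_R0; auto).
  apply H. split; auto. lra.
Qed.

Lemma Rpow_isd x c : 0 < x -> is_derive (fun x => Rpower x c) x (c * Rpower x (c - 1)).
Proof. intros. apply is_derive_Reals. apply derivable_pt_lim_power. auto. Qed.
Lemma Rpow_exd x c : 0 < x -> ex_derive (fun x => Rpower x c) x.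
Proof. intros. eexists. apply Rpow_isd; auto. Qed.

Lemma Wf_cont p y : 2 < p -> continuity_pt (Wf p) y.
Proof.
  intros Hp. destruct (Rtotal_order y 0) as [Hy|[Hy|Hy]].
  - apply cont_ext_loc with (fun z => Rpower (-z) (p-2)).
    + exists (-y). split; [lra|]. intros z Hz.
      rewrite Wf_neg_eq; auto. apply Rabs_def2 in Hz. lra.
    + apply ed_cont. auto_derive. apply Rpow_exd; lra.
  - subst. intros eps Heps.
    destruct (Wf_small p Hp eps Heps) as [d [Hd H]]. exists d; split; auto.
    intros x0 [_ Hx]. simpl in *. unfold R_dist in *. rewrite Wf_0. rewrite !Rminus_0_r in *.
    rewrite Rabs_pos_eq by apply Wf_nonneg. apply H; auto.
  - apply cont_ext_loc with (fun z => Rpower z (p-2)).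
    + exists y. split; [lra|]. intros z Hz.
      rewrite Wf_pos_eq; auto. apply Rabs_def2 in Hz. lra.
    + apply ed_cont. apply Rpow_exd; lra.
Qed.


Lemma isd_eq (f : R -> R) x l l' : is_derive f x l -> l = l' -> is_derive f x l'.
Proof. intros H ->; auto. Qed.

Lemma Vf_pos p z : 0 < z -> Vf p z = Rpower z (p-1).
Proof. intros. unfold Vf. rewrite Wf_pos_eq by auto. replace (p-1) with ((p-2)+1) by ring.
  rewrite Rpower_plus, Rpower_1; auto. Qed.

Lemma Vf_neg p z : z < 0 -> Vf p z = - Rpower (-z) (p-1).
Proof. intros. unfold Vf. rewrite Wf_neg_eq by auto. replace (p-1) with ((p-2)+1) by ring.
  rewrite Rpower_plus, Rpower_1 by lra. ring. Qed.

Lemma Vf_deriv p y : 2 < p -> is_derive (Vf p) y ((p-1) * Wf p y).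
Proof.
  intros Hp. destruct (Rtotal_order y 0) as [Hy|[Hy|Hy]].
  - apply is_derive_ext_loc with (fun z => - Rpower (-z) (p-1)).
    + apply locally_R. exists (-y). split; [lra|]. intros z Hz.
      apply Rabs_def2 in Hz. rewrite Vf_neg; auto; lra.
    + eapply isd_eq. 
      * apply (is_derive_opp (fun z => Rpower (-z) (p-1))).
        apply (is_derive_comp (fun z => Rpower z (p-1)) (fun z => -z)).
        apply Rpow_isd; lra. auto_derive; auto.
      * rewrite Wf_neg_eq by auto. replace (p-1-1) with (p-2) by ring.
        simpl. unfold opp, scal; simpl. unfold mult; simpl. ring.
  - subst. apply is_derive_Reals. rewrite Wf_0, Rmult_0_r. intros eps Heps.
    destruct (Wf_small p Hp eps Heps) as [d [Hd H]]. exists (mkposreal d Hd).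
    intros h Hh0 Hh. simpl in Hh. rewrite Rplus_0_l. unfold Vf. rewrite Wf_0, Rmult_0_l.
    replace ((Wf p h * h - 0) / h - 0) with (Wf p h) by (field; auto).
    rewrite Rabs_pos_eq by apply Wf_nonneg. auto.
  - apply is_derive_ext_loc with (fun z => Rpower z (p-1)).
    + apply locally_R. exists y. split; [lra|]. intros z Hz.
      apply Rabs_def2 in Hz. rewrite Vf_pos; auto; lra.
    + eapply isd_eq. apply Rpow_isd; auto.
      rewrite Wf_pos_eq by auto. replace (p-1-1) with (p-2) by ring. auto.
Qed.

Lemma Pf_deriv p y : 2 < p -> is_derive (Pf p) y (p * Vf p y).
Proof.
  intros Hp. unfold Pf at 1.
  eapply isd_eq.
  - apply (is_derive_mult (Vf p) (fun z => z)). apply Vf_deriv; auto. apply is_derive_id.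
    intros; apply Rmult_comm.
  - unfold Vf. simpl. unfold plus, mult, one; simpl. ring.
Qed.

Lemma Vf_cont p y : 2 < p -> continuity_pt (Vf p) y.
Proof. intros. apply ed_cont. eexists. apply Vf_deriv; auto. Qed.
Lemma Pf_cont p y : 2 < p -> continuity_pt (Pf p) y.
Proof. intros. apply ed_cont. eexists. apply Pf_deriv; auto. Qed.

Lemma Pf_rpow p y : 2 < p -> rpow (Rabs y) p = Pf p y.
Proof.
  intros Hp. unfold Pf, Vf, Wf, rpow. destruct (Rlt_dec 0 (Rabs y)).
  - replace p with ((p-2) + 2) at 1 by ring. rewrite Rpower_plus.
    rewrite Rmult_assoc. f_equal.
    replace 2 with (INR 2) by (simpl; ring). rewrite Rpower_pow by auto. simpl.
    rewrite Rmult_1_r. rewrite <- Rabs_mult. apply Rabs_pos_eq. nra.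
  - assert (y = 0). { destruct (Req_dec y 0); auto. pose proof (Rabs_pos_lt y H). lra. }
    subst. ring.
Qed.


Definition clab (a b z : R) := Rmax a (Rmin b z).

Lemma clab_in a b z : a <= b -> a <= clab a b z <= b.
Proof. intros. unfold clab, Rmax, Rmin. repeat destruct Rle_dec; lra. Qed.
Lemma clab_id a b z : a <= z <= b -> clab a b z = z.
Proof. intros. unfold clab, Rmax, Rmin. repeat destruct Rle_dec; lra. Qed.
Lemma clab_lip a b u v : a <= b -> Rabs (clab a b u - clab a b v) <= Rabs (u - v).
Proof. intros. unfold clab, Rmax, Rmin. repeat destruct Rle_dec;
  repeat (match goal with |- context [Rabs ?x] => 
    destruct (Rcase_abs x); [rewrite (Rabs_left x) by lra | rewrite (Rabs_pos_eq x) by lra] end); lra. Qed.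

Definition relcont (f : R -> R) a b z := forall eps, 0 < eps -> exists d, 0 < d /\
  forall w, a <= w <= b -> Rabs (w - z) < d -> Rabs (f w - f z) < eps.

Lemma relcont_clamp f a b : a <= b -> (forall z, a <= z <= b -> relcont f a b z) ->
  forall y, continuity_pt (fun w => f (clab a b w)) y.
Proof.
  intros Hab H y eps Heps. destruct (H (clab a b y) (clab_in a b y Hab) eps Heps) as [d [Hd Hf]].
  exists d. split; auto. intros w [_ Hw]. simpl in *. unfold R_dist in *.
  apply Hf. apply clab_in; auto. pose proof (clab_lip a b w y Hab). lra.
Qed.

Lemma ex_RInt_rel f a b : a <= b -> (forall z, a <= z <= b -> relcont f a b z) -> ex_RInt f a b.
Proof.
  intros Hab H. apply (@ex_RInt_ext R_NormedModule (fun w => f (clab a b w))).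
  - intros x Hx. rewrite Rmin_left, Rmax_right in Hx by auto. rewrite clab_id; auto; lra.
  - apply (@ex_RInt_continuous R_CompleteNormedModule). intros z _. apply continuity_pt_filterlim. apply relcont_clamp; auto.
Qed.

Lemma EVT_rel f a b : a <= b -> (forall z, a <= z <= b -> relcont f a b z) ->
  exists zm, a <= zm <= b /\ forall w, a <= w <= b -> f w <= f zm.
Proof.
  intros Hab H. destruct (continuity_ab_maj (fun w => f (clab a b w)) a b Hab) as [M [HM HM2]].
  intros; apply relcont_clamp; auto.
  exists M. split; auto. intros w Hw. specialize (HM w Hw). rewrite !clab_id in HM; auto.
Qed.

Lemma cont_relcont f a b z : continuity_pt f z -> relcont f a b z.
Proof.
  intros H eps Heps. destruct (H eps Heps) as [d [Hd Hf]]. exists d; split; auto.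
  intros w _ Hw. destruct (Req_dec w z). subst. rewrite Rminus_diag, Rabs_R0; auto.
  apply (Hf w). split. split; [exact I | auto]. exact Hw.
Qed.

Lemma Rmax_lip t0 u v : Rabs (Rmax t0 u - Rmax t0 v) <= Rabs (u - v).
Proof. unfold Rmax. repeat destruct Rle_dec;
  repeat (match goal with |- context [Rabs ?x] => 
    destruct (Rcase_abs x); [rewrite (Rabs_left x) by lra | rewrite (Rabs_pos_eq x) by lra] end); lra. Qed.

Lemma cont2_clamp (f : R -> R -> R) t0 : 0 <= t0 ->
  cont2_on (fun t z => 0 <= t /\ 0 <= z <= 1) f ->
  forall u v, continuity_2d_pt (fun u v => f (Rmax t0 u) (clab 0 1 v)) u v.
Proof.
  intros Ht0 H u v eps.
  assert (Hd : 0 <= Rmax t0 u /\ 0 <= clab 0 1 v <= 1).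
  { split. pose proof (Rmax_l t0 u); lra. apply clab_in; lra. }
  destruct (H _ _ Hd eps (cond_pos eps)) as [d [Hd0 Hf]].
  exists (mkposreal d Hd0). simpl. intros u' v' Hu Hv. apply Hf.
  split. pose proof (Rmax_l t0 u'); lra. apply clab_in; lra.
  - eapply Rle_lt_trans. apply Rmax_lip. auto.
  - eapply Rle_lt_trans. apply clab_lip. lra. auto.
Qed.

Lemma c2d_1d_2 (g : R -> R -> R) u v : continuity_2d_pt g u v -> continuity_pt (fun w => g u w) v.
Proof.
  intros H eps Heps. destruct (H (mkposreal eps Heps)) as [d Hd].
  exists d. split. apply cond_pos. intros w [_ Hw]. simpl in *. unfold R_dist in *.
  apply Hd; auto. rewrite Rminus_diag, Rabs_R0; apply cond_pos.
Qed.

Lemma c2d_1d_1 (g : R -> R -> R) u v : continuity_2d_pt g u v -> continuity_pt (fun w => g w v) u.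
Proof.
  intros H eps Heps. destruct (H (mkposreal eps Heps)) as [d Hd].
  exists d. split. apply cond_pos. intros w [_ Hw]. simpl in *. unfold R_dist in *.
  apply Hd; auto. rewrite Rminus_diag, Rabs_R0; apply cond_pos.
Qed.

Lemma cont2_interior (D : R -> R -> Prop) f t z : cont2_on D f -> D t z ->
  (exists r, 0 < r /\ forall u v, Rabs (u - t) < r -> Rabs (v - z) < r -> D u v) ->
  continuity_2d_pt f t z.
Proof.
  intros H Dtz [r [Hr HD]] eps. destruct (H t z Dtz eps (cond_pos eps)) as [d [Hd Hf]].
  exists (mkposreal (Rmin d r) (Rmin_pos _ _ Hd Hr)). simpl. intros u v Hu Hv.
  pose proof (Rmin_l d r). pose proof (Rmin_r d r).
  apply Hf; try lra. apply HD; lra.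
Qed.

Lemma open_box t z : 0 < t -> 0 < z < 1 -> exists r, 0 < r /\ forall u v,
  Rabs (u - t) < r -> Rabs (v - z) < r -> 0 < u /\ 0 < v < 1.
Proof.
  intros. exists (Rmin t (Rmin z (1 - z))). split. repeat apply Rmin_pos; lra.
  intros u v Hu Hv. pose proof (Rmin_l t (Rmin z (1-z))). pose proof (Rmin_r t (Rmin z (1-z))).
  pose proof (Rmin_l z (1-z)). pose proof (Rmin_r z (1-z)).
  apply Rabs_def2 in Hu. apply Rabs_def2 in Hv. lra.
Qed.

Lemma deriv01_int f z l : 0 < z < 1 -> deriv01 f z l -> is_derive f z l.
Proof.
  intros Hz H. apply is_derive_Reals. intros eps Heps.
  destruct (H eps Heps) as [al [Hal Hf]].
  assert (Hpos : 0 < Rmin al (Rmin z (1 - z))) by (repeat apply Rmin_pos; lra).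
  exists (mkposreal _ Hpos). intros h Hh0 Hh. simpl in Hh.
  pose proof (Rmin_l al (Rmin z (1-z))). pose proof (Rmin_r al (Rmin z (1-z))).
  pose proof (Rmin_l z (1-z)). pose proof (Rmin_r z (1-z)). apply Rabs_def2 in Hh as Hh'.
  specialize (Hf (z + h)). simpl in Hf. unfold R_dist in Hf.
  replace (z + h - z) with h in Hf by ring. apply Hf. split. split; [lra|lra]. apply Rabs_def2 in Hh.
  unfold Rabs. destruct Rcase_abs; lra.
Qed.

Lemma deriv01_relcont f z l : 0 <= z <= 1 -> deriv01 f z l -> relcont f 0 1 z.
Proof.
  intros Hz H eps Heps. destruct (H 1 Rlt_0_1) as [al [Hal Hf]].
  exists (Rmin al (eps / (Rabs l + 1))). split.
  apply Rmin_pos; auto. apply Rdiv_lt_0_compat; auto. pose proof (Rabs_pos l); lra.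
  intros w Hw Hwz. pose proof (Rmin_l al (eps / (Rabs l + 1))). pose proof (Rmin_r al (eps / (Rabs l + 1))).
  destruct (Req_dec w z). subst. rewrite Rminus_diag, Rabs_R0; auto.
  specialize (Hf w). simpl in Hf. unfold R_dist in Hf.
  assert (Hq : Rabs ((f w - f z) / (w - z) - l) < 1) by (apply Hf; split; [split; auto | lra]).
  assert (Hq2 : Rabs ((f w - f z) / (w - z)) <= Rabs l + 1).
  { pose proof (Rabs_triang_inv ((f w - f z) / (w - z)) l). lra. }
  replace (f w - f z) with ((f w - f z) / (w - z) * (w - z)) by (field; lra).
  rewrite Rabs_mult. 
  assert (Hw1 : Rabs (w - z) < eps / (Rabs l + 1)) by lra.
  assert (Hl1 : 0 < Rabs l + 1) by (pose proof (Rabs_pos l); lra).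
  apply Rmult_lt_compat_l with (r := Rabs l + 1) in Hw1; auto.
  replace ((Rabs l + 1) * (eps / (Rabs l + 1))) with eps in Hw1 by (field; lra).
  pose proof (Rabs_pos (w - z)). pose proof (Rabs_pos ((f w - f z) / (w - z))). nra.
Qed.


Lemma isd_Derive (f : R -> R) x l : is_derive f x l -> Derive f x = l.
Proof. apply is_derive_unique. Qed.

Ltac fix_derive :=
  repeat match goal with
  | H : is_derive ?f ?x ?l |- context [Derive ?g ?x] =>
      replace (Derive g x) with l by (symmetry; apply isd_Derive; exact H)
  end.

Lemma left_max f t1 t l : is_derive f t l -> t1 < t -> (forall s, t1 <= s <= t -> f s <= f t) -> 0 <= l.
Proof.
  intros Hd Ht Hm. apply is_derive_Reals in Hd. destruct (Rle_lt_dec 0 l); auto.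
  destruct (Hd (- l / 2)) as [d Hdd]. lra.
  set (h := - Rmin (d/2) ((t - t1)/2)).
  assert (Hh1 : h < 0). { unfold h. pose proof (Rmin_pos (d/2) ((t-t1)/2)). pose proof (cond_pos d). 
    assert (0 < Rmin (d/2) ((t-t1)/2)) by (apply Rmin_pos; lra). lra. }
  assert (Hh2 : Rabs h < d). { unfold h. rewrite Rabs_Ropp. pose proof (cond_pos d).
    rewrite Rabs_pos_eq. pose proof (Rmin_l (d/2) ((t-t1)/2)). lra. left. apply Rmin_pos; lra. }
  assert (Hh3 : t1 <= t + h). { unfold h. pose proof (Rmin_r (d/2) ((t-t1)/2)). lra. }
  specialize (Hdd h ltac:(lra) Hh2). specialize (Hm (t + h) ltac:(lra)).
  apply Rabs_def2 in Hdd. destruct Hdd as [Hd1 Hd2].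
  assert ((f (t + h) - f t) / h >= 0).
  { unfold Rdiv. replace ((f (t + h) - f t) * / h) with ((f t - f (t+h)) * / (-h)) by (field; lra).
    apply Rle_ge, Rmult_le_pos. lra. left. apply Rinv_0_lt_compat. lra. }
  lra.
Qed.

Lemma fermat f a b z l : (forall w, a < w < b -> f w <= f z) -> a < z < b -> is_derive f z l -> l = 0.
Proof.
  intros Hm Hz Hd. apply is_derive_Reals in Hd.
  destruct (Rtotal_order l 0) as [Hl|[Hl|Hl]]; auto; exfalso.
  - destruct (Hd (- l / 2)) as [d Hdd]. lra.
    set (h := - Rmin (d/2) ((z - a)/2)).
    assert (0 < Rmin (d/2) ((z-a)/2)) by (pose proof (cond_pos d); apply Rmin_pos; lra).
    pose proof (Rmin_l (d/2) ((z-a)/2)). pose proof (Rmin_r (d/2) ((z-a)/2)). pose proof (cond_pos d).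
    assert (Hh2 : Rabs h < d). { unfold h. rewrite Rabs_Ropp, Rabs_pos_eq; lra. }
    specialize (Hdd h ltac:(unfold h; lra) Hh2). specialize (Hm (z + h) ltac:(unfold h; lra)).
    apply Rabs_def2 in Hdd. destruct Hdd as [Hd1 Hd2].
    assert ((f (z + h) - f z) / h >= 0).
    { unfold Rdiv. replace ((f (z + h) - f z) * / h) with ((f z - f (z+h)) * / (-h)) by (field; unfold h; lra).
      apply Rle_ge, Rmult_le_pos. lra. left. apply Rinv_0_lt_compat. unfold h; lra. }
    lra.
  - destruct (Hd (l / 2)) as [d Hdd]. lra.
    set (h := Rmin (d/2) ((b - z)/2)).
    assert (0 < Rmin (d/2) ((b-z)/2)) by (pose proof (cond_pos d); apply Rmin_pos; lra).
    pose proof (Rmin_l (d/2) ((b-z)/2)). pose proof (Rmin_r (d/2) ((b-z)/2)). pose proof (cond_pos d).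
    assert (Hh2 : Rabs h < d). { unfold h. rewrite Rabs_pos_eq; lra. }
    specialize (Hdd h ltac:(unfold h; lra) Hh2). specialize (Hm (z + h) ltac:(unfold h; lra)).
    apply Rabs_def2 in Hdd. destruct Hdd as [Hd1 Hd2].
    assert ((f (z + h) - f z) / h <= 0).
    { unfold Rdiv. apply Rmult_le_0_r. lra. left. apply Rinv_0_lt_compat. unfold h; lra. }
    lra.
Qed.

Lemma SDT f f1 a b z l : (forall w, a < w < b -> is_derive f w (f1 w)) -> a < z < b ->
  is_derive f1 z l -> (forall w, a < w < b -> f w <= f z) -> l <= 0.
Proof.
  intros Hd Hz Hd1 Hm.
  assert (H0 : f1 z = 0) by (apply (fermat f a b z); auto).
  destruct (Rle_lt_dec l 0); auto. exfalso.
  apply is_derive_Reals in Hd1 as Hd1'. destruct (Hd1' (l / 2)) as [d Hdd]. lra.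
  set (h := Rmin (d/2) ((b - z)/2)).
  assert (0 < Rmin (d/2) ((b-z)/2)) by (pose proof (cond_pos d); apply Rmin_pos; lra).
  pose proof (Rmin_l (d/2) ((b-z)/2)). pose proof (Rmin_r (d/2) ((b-z)/2)). pose proof (cond_pos d).
  assert (Hpos : forall c, z < c <= z + h -> 0 < f1 c).
  { intros c Hc. specialize (Hdd (c - z) ltac:(lra)).
    assert (Hcz : Rabs (c - z) < d) by (rewrite Rabs_pos_eq; unfold h in *; lra).
    specialize (Hdd Hcz). replace (z + (c - z)) with c in Hdd by ring. rewrite H0 in Hdd.
    apply Rabs_def2 in Hdd. destruct Hdd as [Ha Hb].
    assert (Hq : 0 < (f1 c - 0) / (c - z)) by lra.
    unfold Rdiv in Hq. apply Rmult_lt_reg_r with (/ (c - z)). apply Rinv_0_lt_compat; lra. lra. }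
  destruct (MVT_cor2 f f1 z (z + h)) as [c [Hc1 Hc2]]. unfold h; lra.
  { intros c Hc. apply is_derive_Reals. apply Hd. unfold h in *; lra. }
  specialize (Hm (z + h) ltac:(unfold h in *; lra)).
  specialize (Hpos c ltac:(lra)). assert (0 < h) by (unfold h; lra). nra.
Qed.

Lemma isd_sub_const (f : R -> R) x l c : is_derive f x l -> is_derive (fun s => f s - c) x l.
Proof. intros H. eapply isd_eq. apply (is_derive_minus f (fun _ => c)). exact H. apply is_derive_const.
  simpl. unfold minus, plus, opp, zero; simpl. ring. Qed.

Lemma max_principle (a B t1 T : R) (y yt yz yzz : R -> R -> R) :
  0 < a -> 0 < B -> 0 < t1 -> t1 <= T ->
  cont2_on (fun t z => 0 <= t /\ 0 <= z <= 1) y ->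
  (forall t z, 0 < t -> 0 < z < 1 -> is_derive (fun s => y s z) t (yt t z)) ->
  (forall t z, 0 < t -> 0 < z < 1 -> is_derive (fun w => y t w) z (yz t z)) ->
  (forall t z, 0 < t -> 0 < z < 1 -> is_derive (fun w => yz t w) z (yzz t z)) ->
  (forall t z, 0 < t -> 0 < z < 1 -> yt t z = a * yzz t z) ->
  (forall t, 0 <= t -> y t 0 = 0) -> (forall t, 0 <= t -> y t 1 = 0) ->
  (forall z, 0 <= z <= 1 -> y t1 z <= B * z * (1 - z)) ->
  forall t z, t1 <= t <= T -> 0 <= z <= 1 -> y t z <= B * z * (1 - z).
Proof.
  intros Ha HB Ht1 HT Hc Hyt Hyz Hyzz Hheat Hb0 Hb1 Hinit.
  set (vh := fun u v => y (Rmax t1 u) (clab 0 1 v) - B * clab 0 1 v * (1 - clab 0 1 v)).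
  assert (Hclc : forall v, continuity_pt (clab 0 1) v).
  { intros v. apply (relcont_clamp (fun w => w) 0 1). lra. intros; apply cont_relcont, continuity_pt_id. }
  assert (Hvc : forall u v, continuity_2d_pt vh u v).
  { intros u v. unfold vh. apply continuity_2d_pt_minus.
    apply (cont2_clamp y t1); auto; lra.
    apply continuity_2d_pt_mult. apply continuity_2d_pt_mult. apply continuity_2d_pt_const.
    apply (continuity_1d_2d_pt_comp (clab 0 1) (fun u v => v)). apply Hclc. apply continuity_2d_pt_id2.
    apply continuity_2d_pt_minus. apply continuity_2d_pt_const.
    apply (continuity_1d_2d_pt_comp (clab 0 1) (fun u v => v)). apply Hclc. apply continuity_2d_pt_id2. }
  assert (EX : forall u, exists zz, 0 <= zz <= 1 /\ forall w, 0 <= w <= 1 -> vh u w <= vh u zz).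
  { intros u. destruct (continuity_ab_maj (vh u) 0 1) as [M [HM1 HM2]]. lra.
    intros c _. apply (c2d_1d_2 vh); auto. exists M; split; auto. }
  set (zm := fun u => proj1_sig (constructive_indefinite_description _ (EX u))).
  assert (Hzm : forall u, 0 <= zm u <= 1 /\ forall w, 0 <= w <= 1 -> vh u w <= vh u (zm u)).
  { intros u. unfold zm. destruct (constructive_indefinite_description _ (EX u)); simpl; auto. }
  set (m := fun u => vh u (zm u)).
  assert (Hmc : forall u, continuity_pt m u).
  { intros u eps Heps.
    destruct (uniform_continuity_2d_1d' vh 0 1 u (fun x _ => Hvc u x) (mkposreal eps Heps)) as [d Hd].
    exists d. split. apply cond_pos. intros s [_ Hs]. simpl in *. unfold R_dist in *.
    apply Rabs_def2 in Hs as Hs'. pose proof (cond_pos d).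
    destruct (Hzm u) as [Hu1 Hu2]. destruct (Hzm s) as [Hs1 Hs2].
    assert (A1 := Hd (zm u) u (zm u) s Hu1 ltac:(lra) Hu1 ltac:(lra) ltac:(rewrite Rminus_diag, Rabs_R0; apply cond_pos)).
    assert (A2 := Hd (zm s) s (zm s) u Hs1 ltac:(lra) Hs1 ltac:(lra) ltac:(rewrite Rminus_diag, Rabs_R0; apply cond_pos)).
    simpl in A1, A2. apply Rabs_def2 in A1. apply Rabs_def2 in A2.
    specialize (Hu2 (zm s) Hs1). specialize (Hs2 (zm u) Hu1). unfold m. apply Rabs_def1; lra. }
  destruct (continuity_ab_maj m t1 T HT (fun c _ => Hmc c)) as [ts [Hts1 Hts2]].
  assert (Hvh : forall t z, t1 <= t -> 0 <= z <= 1 -> vh t z = y t z - B * z * (1 - z)).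
  { intros t z Ht Hz. unfold vh. rewrite clab_id by auto. rewrite Rmax_right by lra. auto. }
  assert (Hmax : m ts <= 0).
  { destruct (Rle_lt_dec (m ts) 0) as [|Hpos]; auto. exfalso.
    destruct (Hzm ts) as [Hz1 Hz2]. set (zs := zm ts) in *.
    assert (Hmts : m ts = y ts zs - B * zs * (1 - zs)) by (unfold m; apply Hvh; lra).
    assert (Hzs0 : zs <> 0). { intro E. rewrite E in Hmts. rewrite Hb0 in Hmts by lra. lra. }
    assert (Hzs1 : zs <> 1). { intro E. rewrite E in Hmts. rewrite Hb1 in Hmts by lra. lra. }
    assert (Hts : ts <> t1). { intro E. assert (y ts zs <= B * zs * (1 - zs)) by (rewrite E; apply Hinit; auto). lra. }
    assert (Hz : 0 < zs < 1) by lra. assert (Ht : t1 < ts) by lra.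
    assert (D1 : is_derive (fun s => vh s zs) ts (yt ts zs)).
    { apply is_derive_ext_loc with (fun s => y s zs - B * zs * (1 - zs)).
      apply locally_R. exists (ts - t1). split. lra. intros s Hs. apply Rabs_def2 in Hs.
      rewrite Hvh; auto; lra.
      apply isd_sub_const. apply Hyt; lra. }
    assert (L1 : 0 <= yt ts zs).
    { apply (left_max (fun s => vh s zs) t1 ts); auto. intros s Hs.
      transitivity (m s). unfold m. apply (Hzm s); auto. apply Hts1; lra. }
    assert (L2 : yzz ts zs + 2 * B <= 0).
    { apply (SDT (fun w => vh ts w) (fun w => yz ts w - B * (1 - 2 * w)) 0 1 zs); auto.
      - intros w Hw. apply is_derive_ext_loc with (fun w => y ts w - B * w * (1 - w)).
        apply locally_R. exists (Rmin w (1 - w)). split. apply Rmin_pos; lra. intros s Hs.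
        pose proof (Rmin_l w (1-w)). pose proof (Rmin_r w (1-w)). apply Rabs_def2 in Hs.
        rewrite Hvh; auto; lra.
        assert (Hq := Hyz ts w ltac:(lra) Hw).
        auto_derive. eexists; exact Hq. fix_derive. ring.
      - assert (Hq := Hyzz ts zs ltac:(lra) Hz).
        auto_derive. eexists; exact Hq. fix_derive. ring.
      - intros w Hw. apply Hz2. lra. }
    rewrite Hheat in L1 by lra. nra. }
  intros t z Ht Hz. assert (vh t z <= 0).
  { transitivity (m t). apply (Hzm t); auto. transitivity (m ts); auto. }
  rewrite Hvh in H by lra. lra.
Qed.


Lemma relcont_abs f a b z : relcont f a b z -> relcont (fun w => Rabs (f w)) a b z.
Proof.
  intros H eps Heps. destruct (H eps Heps) as [d [Hd Hf]]. exists d; split; auto.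
  intros w Hw Hwz. eapply Rle_lt_trans. apply Rabs_triang_inv2. auto.
Qed.

Lemma barrier_init (y : R -> R) : C2_01 y -> y 0 = 0 -> y 1 = 0 ->
  exists B, 0 < B /\ forall z, 0 <= z <= 1 -> Rabs (y z) <= B * z * (1 - z).
Proof.
  intros [f1 [f2 H]] H0 H1.
  assert (Hf1 : forall z, 0 <= z <= 1 -> relcont f1 0 1 z).
  { intros z Hz. apply (deriv01_relcont f1 z (f2 z)); auto. apply H; auto. }
  assert (Hy : forall z, 0 <= z <= 1 -> relcont y 0 1 z).
  { intros z Hz. apply (deriv01_relcont y z (f1 z)); auto. apply H; auto. }
  destruct (EVT_rel (fun w => Rabs (f1 w)) 0 1) as [zM [HzM HM]]. lra.
  intros; apply relcont_abs; auto.
  set (M := Rabs (f1 zM)).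
  set (h := fun w => y (clab 0 1 w)).
  assert (Hhc : forall w, continuity_pt h w) by (apply relcont_clamp; auto; lra).
  assert (Hhd : forall w, 0 < w < 1 -> is_derive h w (f1 w)).
  { intros w Hw. apply is_derive_ext_loc with y.
    apply locally_R. exists (Rmin w (1 - w)). split. apply Rmin_pos; lra. intros s Hs.
    pose proof (Rmin_l w (1-w)). pose proof (Rmin_r w (1-w)). apply Rabs_def2 in Hs.
    unfold h. rewrite clab_id; auto; lra.
    apply deriv01_int; auto. apply H; lra. }
  assert (HA : forall z, 0 <= z <= 1 -> Rabs (y z) <= M * z).
  { intros z Hz. destruct (MVT_gen h 0 z f1) as [c [Hc Heq]].
    - intros x Hx. rewrite Rmin_left, Rmax_right in Hx by lra. apply Hhd; lra.
    - intros; apply Hhc.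
    - rewrite Rmin_left, Rmax_right in Hc by lra. unfold h in Heq. rewrite !clab_id in Heq by lra.
      rewrite H0 in Heq. rewrite Rminus_0_r in Heq. rewrite Heq, Rminus_0_r, Rabs_mult.
      rewrite (Rabs_pos_eq z) by lra. apply Rmult_le_compat_r; [lra|]. apply HM; lra. }
  assert (HB : forall z, 0 <= z <= 1 -> Rabs (y z) <= M * (1 - z)).
  { intros z Hz. destruct (MVT_gen h z 1 f1) as [c [Hc Heq]].
    - intros x Hx. rewrite Rmin_left, Rmax_right in Hx by lra. apply Hhd; lra.
    - intros; apply Hhc.
    - rewrite Rmin_left, Rmax_right in Hc by lra. unfold h in Heq. rewrite !clab_id in Heq by lra.
      rewrite H1 in Heq. replace (y z) with (- (f1 c * (1 - z))) by lra.
      rewrite Rabs_Ropp, Rabs_mult, (Rabs_pos_eq (1 - z)) by lra.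
      apply Rmult_le_compat_r; [lra|]. apply HM; lra. }
  exists (2 * M + 1). split. pose proof (Rabs_pos (f1 zM)); unfold M; lra.
  intros z Hz. specialize (HA z Hz). specialize (HB z Hz). pose proof (Rabs_pos (f1 zM)). fold M in H2.
  destruct (Rle_lt_dec z (1/2)); nra.
Qed.


Record HS (a p : R) (x xt xz xzz : R -> R -> R) : Prop := mkHS {
  hs_a : 0 < a; hs_p : 2 < p;
  hs_cont : cont2_on (fun t z => 0 <= t /\ 0 <= z <= 1) x;
  hs_xt : forall t z, 0 < t -> 0 < z < 1 -> is_derive (fun s => x s z) t (xt t z);
  hs_xz : forall t z, 0 < t -> 0 < z < 1 -> is_derive (fun w => x t w) z (xz t z);
  hs_xzz : forall t z, 0 < t -> 0 < z < 1 -> is_derive (fun w => xz t w) z (xzz t z);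
  hs_cxt : cont2_on (fun t z => 0 < t /\ 0 < z < 1) xt;
  hs_cxzz : cont2_on (fun t z => 0 < t /\ 0 < z < 1) xzz;
  hs_heat : forall t z, 0 < t -> 0 < z < 1 -> xt t z = a * xzz t z;
  hs_bc0 : forall t, 0 <= t -> x t 0 = 0;
  hs_bc1 : forall t, 0 <= t -> x t 1 = 0;
  hs_C2 : forall t, 0 <= t -> C2_01 (x t) }.

Definition kk z := PI * cos (PI * z) / sin (PI * z).

Lemma sinPI_pos z : 0 < z < 1 -> 0 < sin (PI * z).
Proof. intros. apply sin_gt_0. pose proof PI_RGT_0. nra. pose proof PI_RGT_0. nra. Qed.

Lemma kk_d z : 0 < z < 1 -> is_derive kk z (- PI^2 - kk z ^ 2).
Proof.
  intros Hz. pose proof (sinPI_pos z Hz). unfold kk. auto_derive. lra.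
  assert (E := sin2_cos2 (PI * z)). unfold Rsqr in E.
  match goal with |- ?a = ?b => change (@eq R a b) end. change RinvImpl.Rinv with Rinv.
  transitivity (- PI^2 * (sin (PI*z) * sin (PI*z) + cos (PI*z) * cos (PI*z)) / (sin (PI*z) * sin (PI*z))).
  field. lra. field. lra.
Qed.

Lemma kk_cont z : 0 < z < 1 -> continuity_pt kk z.
Proof. intros. apply ed_cont. eexists. apply kk_d; auto. Qed.

Lemma cmul f g x : continuity_pt f x -> continuity_pt g x -> continuity_pt (fun z => f z * g z) x.
Proof. intros; apply (continuity_pt_mult f g); auto. Qed.
Lemma cadd f g x : continuity_pt f x -> continuity_pt g x -> continuity_pt (fun z => f z + g z) x.
Proof. intros; apply (continuity_pt_plus f g); auto. Qed.
Lemma csub f g x : continuity_pt f x -> continuity_pt g x -> continuity_pt (fun z => f z - g z) x.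
Proof. intros; apply (continuity_pt_minus f g); auto. Qed.
Lemma cconst c x : continuity_pt (fun _ => c) x.
Proof. apply continuity_pt_const. intros a b; auto. Qed.
Lemma cid x : continuity_pt (fun z => z) x.
Proof. apply continuity_pt_id. Qed.
Lemma ccomp f g x : continuity_pt g x -> continuity_pt f (g x) -> continuity_pt (fun z => f (g z)) x.
Proof. intros; apply (continuity_pt_comp g f); auto. Qed.

Lemma copp f x : continuity_pt f x -> continuity_pt (fun z => - f z) x.
Proof. intros; apply (continuity_pt_opp f); auto. Qed.
Ltac cont_tac := repeat first [apply cconst | apply cmul | apply csub | apply cadd | apply copp | apply cid].


Lemma cpt_of_isd (f : R -> R) x l : is_derive f x l -> continuity_pt f x.
Proof. intros. apply ed_cont. eexists; eauto. Qed.

Lemma int_cont_z (D : R -> R -> Prop) f s z : cont2_on (fun t z => 0 < t /\ 0 < z < 1) f ->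
  0 < s -> 0 < z < 1 -> continuity_pt (f s) z.
Proof.
  intros H Hs Hz. apply (c2d_1d_2 f). apply (cont2_interior _ f s z H). split; auto.
  destruct (open_box s z Hs Hz) as [r [Hr Hb]]. exists r. split; auto.
Qed.

Lemma x_c2d a p x xt xz xzz : HS a p x xt xz xzz -> forall s z, 0 < s -> 0 < z < 1 -> continuity_2d_pt x s z.
Proof.
  intros H s z Hs Hz. apply (cont2_interior _ x s z (hs_cont _ _ _ _ _ _ H)). lra.
  destruct (open_box s z Hs Hz) as [r [Hr Hb]]. exists r. split; auto.
  intros u v Hu Hv. specialize (Hb u v Hu Hv). lra.
Qed.

Lemma xt_c2d a p x xt xz xzz : HS a p x xt xz xzz -> forall s z, 0 < s -> 0 < z < 1 -> continuity_2d_pt xt s z.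
Proof.
  intros H s z Hs Hz. apply (cont2_interior _ xt s z (hs_cxt _ _ _ _ _ _ H)). lra.
  destruct (open_box s z Hs Hz) as [r [Hr Hb]]. exists r. split; auto.
Qed.

Lemma ex_RInt_cpt f a b : a <= b -> (forall z, a <= z <= b -> continuity_pt f z) -> ex_RInt f a b.
Proof.
  intros Hab H. apply (@ex_RInt_continuous R_CompleteNormedModule). intros z Hz.
  rewrite Rmin_left, Rmax_right in Hz by auto. apply continuity_pt_filterlim. auto.
Qed.


Definition Gp p (x : R -> R -> R) c0 c1 al be s := RInt (fun z => (c0 + c1*z) * Pf p (x s z)) al be.
Definition DGp p (x : R -> R -> R) (xt : R -> R -> R) c0 c1 al be s :=
  RInt (fun z => (c0 + c1*z) * (p * Vf p (x s z) * xt s z)) al be.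
Definition mu a p := 4 * a * (p - 1) / p.
Definition Fp a p (x : R -> R -> R) (xz : R -> R -> R) c0 c1 s z := a*p*(c0+c1*z)*Vf p (x s z)*xz s z
  - a*c1*Pf p (x s z) - mu a p*(c0+c1*z)*kk z*Pf p (x s z).
Definition Jp a p (x : R -> R -> R) c1 s z := mu a p * c1 * kk z * Pf p (x s z).


Lemma dpt a p x xt xz xzz c0 c1 : HS a p x xt xz xzz -> forall u z, 0 < u -> 0 < z < 1 ->
  is_derive (fun u => (c0 + c1 * z) * Pf p (x u z)) u ((c0 + c1*z) * (p * Vf p (x u z) * xt u z)).
Proof.
  intros H u z Hu Hz. pose proof (hs_p _ _ _ _ _ _ H) as Hp.
  assert (H1 := hs_xt _ _ _ _ _ _ H u z Hu Hz). assert (H2 := Pf_deriv p (x u z) Hp).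
  auto_derive. repeat split; eexists; first [exact H1 | exact H2].
  fix_derive. ring.
Qed.

Lemma piece_deriv a p x xt xz xzz c0 c1 al be s : HS a p x xt xz xzz -> 0 < s -> 0 < al -> al <= be -> be < 1 ->
  is_derive (Gp p x c0 c1 al be) s (DGp p x xt c0 c1 al be s).
Proof.
  intros H Hs Hal Hab Hbe. pose proof (hs_p _ _ _ _ _ _ H) as Hp.
  unfold Gp, DGp.
  eapply isd_eq.
  apply (is_derive_RInt_param (fun u z => (c0 + c1*z) * Pf p (x u z))).
  - apply locally_R. exists s. split; auto. intros u Hu. apply Rabs_def2 in Hu.
    intros t Ht. rewrite Rmin_left, Rmax_right in Ht by auto.
    eexists. apply (dpt a p x xt xz xzz c0 c1 H); lra.
  - intros t Ht. rewrite Rmin_left, Rmax_right in Ht by auto.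
    apply continuity_2d_pt_ext_loc with (fun u v => (c0 + c1*v) * (p * Vf p (x u v) * xt u v)).
    + destruct (open_box s t Hs ltac:(lra)) as [r [Hr Hb]]. exists (mkposreal r Hr).
      simpl. intros u v Hu Hv. specialize (Hb u v Hu Hv). symmetry. apply isd_Derive.
      apply (dpt a p x xt xz xzz c0 c1 H); lra.
    + apply continuity_2d_pt_mult.
      apply continuity_2d_pt_plus. apply continuity_2d_pt_const.
      apply continuity_2d_pt_mult. apply continuity_2d_pt_const. apply continuity_2d_pt_id2.
      apply continuity_2d_pt_mult. apply continuity_2d_pt_mult. apply continuity_2d_pt_const.
      apply (continuity_1d_2d_pt_comp (Vf p) x). apply Vf_cont; auto.
      apply (x_c2d a p x xt xz xzz H); lra.
      apply (xt_c2d a p x xt xz xzz H); lra.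
  - apply locally_R. exists s. split; auto. intros u Hu. apply Rabs_def2 in Hu.
    apply ex_RInt_cpt; auto. intros z Hz. 
    apply cmul. apply cadd. apply cconst. apply cmul. apply cconst. apply cid.
    apply (ccomp (Pf p) (x u)). apply (cpt_of_isd _ _ _ (hs_xz _ _ _ _ _ _ H u z ltac:(lra) ltac:(lra))).
    apply Pf_cont; auto.
  - apply RInt_ext. intros z Hz. rewrite Rmin_left, Rmax_right in Hz by auto.
    apply isd_Derive. apply (dpt a p x xt xz xzz c0 c1 H); lra.
Qed.

Lemma RIc (f : R -> R) a b : ex_RInt f a b -> is_RInt f a b (RInt f a b).
Proof. intros. apply (@RInt_correct R_CompleteNormedModule). auto. Qed.

Lemma RInt_lin (f g : R -> R) k al be : ex_RInt f al be -> ex_RInt g al be ->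
  RInt (fun z => f z + k * g z) al be = RInt f al be + k * RInt g al be.
Proof.
  intros Hf Hg. apply is_RInt_unique.
  apply (is_RInt_plus f (fun z => k * g z)). apply RIc; auto.
  apply (is_RInt_scal g). apply RIc; auto.
Qed.

Lemma RInt_add (f g : R -> R) al be : ex_RInt f al be -> ex_RInt g al be ->
  RInt (fun z => f z + g z) al be = RInt f al be + RInt g al be.
Proof.
  intros Hf Hg. apply is_RInt_unique.
  apply (is_RInt_plus f g); apply RIc; auto.
Qed.

Ltac leaf_tac := match goal with H : forall z, 0 < z < 1 -> continuity_pt ?f z |- continuity_pt ?f _ => apply H; lra end.

Ltac cont_tac2 := repeat first [leaf_tac | apply cconst | apply cmul | apply csub | apply cadd | apply copp | apply cid].

Lemma piece_ineq a p x xt xz xzz c0 c1 al be s : HS a p x xt xz xzz -> 0 < s -> 0 < al -> al <= be -> be < 1 ->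
  (forall z, al <= z <= be -> 0 <= c0 + c1 * z) ->
  DGp p x xt c0 c1 al be s + mu a p * PI^2 * Gp p x c0 c1 al be s <=
  Fp a p x xz c0 c1 s be - Fp a p x xz c0 c1 s al + RInt (Jp a p x c1 s) al be.
Proof.
  intros H Hs Hal Hab Hbe Hphi. pose proof (hs_p _ _ _ _ _ _ H) as Hp. pose proof (hs_a _ _ _ _ _ _ H) as Ha.
  set (Fd := fun z => a*p*(c1*Vf p (x s z)*xz s z + (c0+c1*z)*((p-1)*Wf p (x s z)*xz s z)*xz s z
      + (c0+c1*z)*Vf p (x s z)*xzz s z) - a*c1*(p*Vf p (x s z)*xz s z)
      - mu a p*(c1*kk z*Pf p (x s z) + (c0+c1*z)*(-PI^2 - kk z * kk z)*Pf p (x s z)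
         + (c0+c1*z)*kk z*(p*Vf p (x s z)*xz s z))).
  assert (HX : forall z, 0 < z < 1 -> is_derive (fun w => x s w) z (xz s z)) by (intros; apply (hs_xz _ _ _ _ _ _ H); auto).
  assert (HX1 : forall z, 0 < z < 1 -> is_derive (fun w => xz s w) z (xzz s z)) by (intros; apply (hs_xzz _ _ _ _ _ _ H); auto).
  assert (cX : forall z, 0 < z < 1 -> continuity_pt (fun w => x s w) z) by (intros; eapply cpt_of_isd; eauto).
  assert (cX1 : forall z, 0 < z < 1 -> continuity_pt (fun w => xz s w) z) by (intros; eapply cpt_of_isd; eauto).
  assert (cX2 : forall z, 0 < z < 1 -> continuity_pt (fun w => xzz s w) z)
    by (intros; apply (int_cont_z (fun _ _ => True) xzz s z (hs_cxzz _ _ _ _ _ _ H)); auto).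
  assert (cXt : forall z, 0 < z < 1 -> continuity_pt (fun w => xt s w) z)
    by (intros; apply (int_cont_z (fun _ _ => True) xt s z (hs_cxt _ _ _ _ _ _ H)); auto).
  assert (cV : forall z, 0 < z < 1 -> continuity_pt (fun w => Vf p (x s w)) z)
    by (intros; apply (ccomp (Vf p) (x s)); [apply cX; auto | apply Vf_cont; auto]).
  assert (cW : forall z, 0 < z < 1 -> continuity_pt (fun w => Wf p (x s w)) z)
    by (intros; apply (ccomp (Wf p) (x s)); [apply cX; auto | apply Wf_cont; auto]).
  assert (cP : forall z, 0 < z < 1 -> continuity_pt (fun w => Pf p (x s w)) z)
    by (intros; apply (ccomp (Pf p) (x s)); [apply cX; auto | apply Pf_cont; auto]).
  assert (ck : forall z, 0 < z < 1 -> continuity_pt kk z) by (intros; apply kk_cont; auto).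
  assert (HFd : forall z, 0 < z < 1 -> is_derive (Fp a p x xz c0 c1 s) z (Fd z)).
  { intros z Hz. unfold Fp, Fd.
    assert (D1 := HX z Hz). assert (D2 := HX1 z Hz). assert (D3 := Vf_deriv p (x s z) Hp).
    assert (D4 := Pf_deriv p (x s z) Hp). assert (D5 := kk_d z Hz).
    auto_derive. repeat split; eexists; first [exact D1 | exact D2 | exact D3 | exact D4 | exact D5].
    fix_derive. ring. }
  assert (Hin : forall z, al <= z <= be -> 0 < z < 1) by (intros; lra).
  assert (eFd : ex_RInt Fd al be).
  { apply ex_RInt_cpt; auto. intros z Hz. specialize (Hin z Hz). unfold Fd. cont_tac2. }
  assert (eJ : ex_RInt (Jp a p x c1 s) al be).
  { apply ex_RInt_cpt; auto. intros z Hz. specialize (Hin z Hz). unfold Jp. cont_tac2. }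
  assert (eA : ex_RInt (fun z => (c0 + c1*z) * (p * Vf p (x s z) * xt s z)) al be).
  { apply ex_RInt_cpt; auto. intros z Hz. specialize (Hin z Hz). cont_tac2. }
  assert (eB : ex_RInt (fun z => (c0 + c1*z) * Pf p (x s z)) al be).
  { apply ex_RInt_cpt; auto. intros z Hz. specialize (Hin z Hz). cont_tac2. }
  assert (EF : RInt Fd al be = Fp a p x xz c0 c1 s be - Fp a p x xz c0 c1 s al).
  { apply is_RInt_unique. apply (is_RInt_derive (Fp a p x xz c0 c1 s) Fd).
    intros z Hz. rewrite Rmin_left, Rmax_right in Hz by auto. apply HFd; lra.
    intros z Hz. rewrite Rmin_left, Rmax_right in Hz by auto. specialize (Hin z Hz).
    apply continuity_pt_filterlim. unfold Fd. cont_tac2. }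
  unfold DGp, Gp. rewrite <- RInt_lin by auto. rewrite <- EF. rewrite <- RInt_add by auto.
  apply RInt_le; auto.
  - apply (ex_RInt_plus (fun z => (c0 + c1*z) * (p * Vf p (x s z) * xt s z)) (fun z => mu a p * PI^2 * ((c0 + c1*z) * Pf p (x s z)))); auto.
    apply (ex_RInt_scal (fun z => ((c0 + c1*z) * Pf p (x s z)))); auto.
  - apply (ex_RInt_plus Fd (Jp a p x c1 s)); auto.
  - intros z Hz. assert (Hz' : 0 < z < 1) by lra. rewrite (hs_heat _ _ _ _ _ _ H s z Hs Hz').
    unfold Fd, Jp. unfold Pf, Vf.
    assert (Hph := Hphi z ltac:(lra)). pose proof (Wf_nonneg p (x s z)).
    assert (Hmu : 0 <= mu a p) by (unfold mu; apply Rmult_le_pos; [nra | left; apply Rinv_0_lt_compat; lra]).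
    set (W := Wf p (x s z)) in *. set (X := x s z). set (X1 := xz s z). set (X2 := xzz s z). set (K := kk z).
    set (ph := c0 + c1 * z) in *. set (m := mu a p) in *.
    assert (Em : m * p = 4 * a * (p - 1)) by (unfold m, mu; field; lra).
    assert (Hsq : 0 <= ph * W * m * ((p/2) * X1 - K * X) ^ 2).
    { apply Rmult_le_pos. apply Rmult_le_pos. apply Rmult_le_pos; auto. auto. apply pow2_ge_0. }
    assert (Eq : (a * p * (c1 * (W * X) * X1 + ph * ((p - 1) * W * X1) * X1 + ph * (W * X) * X2) -
      a * c1 * (p * (W * X) * X1) - m * (c1 * K * (W * X * X) + ph * (- PI ^ 2 - K * K) * (W * X * X) +
      ph * K * (p * (W * X) * X1)) + m * c1 * K * (W * X * X))
      - (ph * (p * (W * X) * (a * X2)) + m * PI ^ 2 * (ph * (W * X * X)))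
      = ph * W * m * ((p/2) * X1 - K * X) ^ 2).
    { replace a with (m * p / (4 * (p - 1))) by (field_simplify_eq; [nra | lra]). field. lra. }
    lra.
Qed.


Lemma kk_bound z : 0 < z <= 1/4 -> kk z <= 2 / z.
Proof.
  intros Hz. pose proof PI_RGT_0. pose proof PI_4.
  assert (Ha : 0 < PI * z <= 1) by nra.
  assert (Hsb := sin_bound (PI*z) 0 ltac:(lra) ltac:(nra)). destruct Hsb as [Hs _].
  unfold sin_approx, sin_term in Hs. simpl in Hs.
  set (u := PI * z) in *.
  replace (1 * (u * 1 / 1) + -1 * 1 * (u * (u * (u * 1)) / (1 + 1 + 1 + 1 + 1 + 1))) with (u - u*u*u/6) in Hs by field.
  assert (Hs2 : u / 2 <= sin u) by nra. unfold u in *.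
  unfold kk. pose proof (COS_bound (PI * z)) as [_ Hc].
  apply Rle_trans with (PI / sin (PI * z)).
  unfold Rdiv. apply Rmult_le_compat_r. left. apply Rinv_0_lt_compat. lra.
  apply Rle_trans with (PI*1); [apply Rmult_le_compat_l; lra | lra].
  apply Rle_trans with (PI / (PI * z / 2)).
  unfold Rdiv. apply Rmult_le_compat_l. lra. apply Rinv_le_contravar. nra. auto.
  right. field. split; lra.
Qed.

Lemma kk_sym z : kk z = - kk (1 - z).
Proof.
  unfold kk. replace (PI * (1 - z)) with (PI - PI * z) by ring.
  rewrite sin_PI_x, Rtrigo_facts.cos_pi_minus. unfold Rdiv. ring.
Qed.

Lemma relcont_comp (F f : R -> R) a b z : continuity_pt F (f z) -> relcont f a b z -> relcont (fun w => F (f w)) a b z.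
Proof.
  intros HF Hf eps Heps. destruct (HF eps Heps) as [d [Hd HF2]].
  destruct (Hf d Hd) as [d2 [Hd2 Hf2]]. exists d2. split; auto.
  intros w Hw Hwz. destruct (Req_dec (f w) (f z)) as [E|E]. rewrite E, Rminus_diag, Rabs_R0; auto.
  apply (HF2 (f w)). split. split; [exact I | auto]. apply Hf2; auto.
Qed.

Lemma Pf_bound p y c : 2 < p -> Rabs y <= c -> c <= 1 -> Pf p y <= c * c.
Proof.
  intros Hp Hy Hc. eapply Rle_trans. apply Pf_le; auto. lra.
  pose proof (Rabs_pos y). replace (y * y) with (Rabs y * Rabs y). nra.
  rewrite <- Rabs_mult. apply Rabs_pos_eq. nra.
Qed.

Lemma x_relcont a p x xt xz xzz s : HS a p x xt xz xzz -> 0 <= s -> forall z, 0 <= z <= 1 -> relcont (x s) 0 1 z.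
Proof.
  intros H Hs z Hz eps Heps. destruct (hs_cont _ _ _ _ _ _ H s z (conj Hs Hz) eps Heps) as [d [Hd Hf]].
  exists d. split; auto. intros w Hw Hwz. apply Hf; auto. rewrite Rminus_diag, Rabs_R0; auto.
Qed.

Lemma g_exRInt a p x xt xz xzz s u v : HS a p x xt xz xzz -> 0 <= s -> 0 <= u -> u <= v -> v <= 1 ->
  ex_RInt (fun z => Pf p (x s z)) u v.
Proof.
  intros H Hs Hu Huv Hv. apply ex_RInt_rel; auto. intros z Hz.
  assert (Hr := x_relcont a p x xt xz xzz s H Hs z ltac:(lra)).
  intros eps Heps. destruct (relcont_comp (Pf p) (x s) 0 1 z (Pf_cont p _ (hs_p _ _ _ _ _ _ H)) Hr eps Heps) as [d [Hd Hf]].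
  exists d; split; auto. intros w Hw Hwz. apply Hf; auto; lra.
Qed.

Lemma abs_split y c : Rabs y <= c -> - c <= y <= c.
Proof. unfold Rabs; destruct Rcase_abs; lra. Qed.

Lemma barrier_all a p x xt xz xzz t1 t2 : HS a p x xt xz xzz -> 0 < t1 -> t1 <= t2 ->
  exists B, 0 < B /\ forall s z, t1 <= s <= t2 -> 0 <= z <= 1 -> Rabs (x s z) <= B * z * (1 - z).
Proof.
  intros H Ht1 Ht12.
  destruct (barrier_init (x t1) (hs_C2 _ _ _ _ _ _ H t1 ltac:(lra)) (hs_bc0 _ _ _ _ _ _ H t1 ltac:(lra))
    (hs_bc1 _ _ _ _ _ _ H t1 ltac:(lra))) as [B [HB HBz]].
  exists B. split; auto. intros s z Hs Hz.
  pose proof (hs_a _ _ _ _ _ _ H) as Ha.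
  assert (U : x s z <= B * z * (1 - z)).
  { apply (max_principle a B t1 t2 x xt xz xzz); auto.
    apply (hs_cont _ _ _ _ _ _ H). apply (hs_xt _ _ _ _ _ _ H). apply (hs_xz _ _ _ _ _ _ H).
    apply (hs_xzz _ _ _ _ _ _ H). apply (hs_heat _ _ _ _ _ _ H). apply (hs_bc0 _ _ _ _ _ _ H).
    apply (hs_bc1 _ _ _ _ _ _ H). intros w Hw. specialize (HBz w Hw). apply abs_split in HBz. lra. }
  assert (L : - x s z <= B * z * (1 - z)).
  { apply (max_principle a B t1 t2 (fun t z => - x t z) (fun t z => - xt t z) (fun t z => - xz t z) (fun t z => - xzz t z)); auto.
    - intros t w Htw eps Heps. destruct (hs_cont _ _ _ _ _ _ H t w Htw eps Heps) as [d [Hd Hf]].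
      exists d; split; auto. intros s' w' Hsw Hs' Hw'. rewrite <- Rabs_Ropp.
      replace (- (- x s' w' - - x t w)) with (x s' w' - x t w) by ring. auto.
    - intros t w Ht Hw. apply (is_derive_opp (fun s => x s w)). apply (hs_xt _ _ _ _ _ _ H); auto.
    - intros t w Ht Hw. apply (is_derive_opp (fun s => x t s)). apply (hs_xz _ _ _ _ _ _ H); auto.
    - intros t w Ht Hw. apply (is_derive_opp (fun s => xz t s)). apply (hs_xzz _ _ _ _ _ _ H); auto.
    - intros t w Ht Hw. rewrite (hs_heat _ _ _ _ _ _ H); auto. ring.
    - intros t Ht. rewrite (hs_bc0 _ _ _ _ _ _ H); auto. ring.
    - intros t Ht. rewrite (hs_bc1 _ _ _ _ _ _ H); auto. ring.
    - intros w Hw. specialize (HBz w Hw). apply abs_split in HBz. lra. }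
  apply Rabs_le. lra.
Qed.


Lemma RInt_le_const (f : R -> R) c u v : u <= v -> ex_RInt f u v -> (forall z, u < z < v -> f z <= c) ->
  RInt f u v <= (v - u) * c.
Proof.
  intros Huv Hf H. replace ((v - u) * c) with (RInt (fun _ => c) u v).
  apply RInt_le; auto. apply ex_RInt_const. rewrite RInt_const. reflexivity.
Qed.

Lemma RInt_ge_const (f : R -> R) c u v : u <= v -> ex_RInt f u v -> (forall z, u < z < v -> c <= f z) ->
  (v - u) * c <= RInt f u v.
Proof.
  intros Huv Hf H. replace ((v - u) * c) with (RInt (fun _ => c) u v).
  apply RInt_le; auto. apply ex_RInt_const. rewrite RInt_const. reflexivity.
Qed.

Lemma Chas (f : R -> R) u v w : ex_RInt f u v -> ex_RInt f v w -> RInt f u w = RInt f u v + RInt f v w.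
Proof. intros. symmetry. apply (RInt_Chasles f u v w); auto. Qed.

Lemma J_exRInt a p x xt xz xzz c1 s u v : HS a p x xt xz xzz -> 0 < s -> 0 < u -> u <= v -> v < 1 ->
  ex_RInt (Jp a p x c1 s) u v.
Proof.
  intros H Hs Hu Huv Hv. pose proof (hs_p _ _ _ _ _ _ H).
  apply ex_RInt_cpt; auto. intros z Hz. unfold Jp.
  apply cmul. apply cmul. apply cconst. apply kk_cont; lra.
  apply (ccomp (Pf p) (x s)). apply (cpt_of_isd _ _ _ (hs_xz _ _ _ _ _ _ H s z Hs ltac:(lra))).
  apply Pf_cont; auto.
Qed.

Lemma Gp_exRInt a p x xt xz xzz c0 c1 s u v : HS a p x xt xz xzz -> 0 < s -> 0 < u -> u <= v -> v < 1 ->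
  ex_RInt (fun z => (c0 + c1*z) * Pf p (x s z)) u v.
Proof.
  intros H Hs Hu Huv Hv. pose proof (hs_p _ _ _ _ _ _ H).
  apply ex_RInt_cpt; auto. intros z Hz.
  apply cmul. apply cadd. apply cconst. apply cmul. apply cconst. apply cid.
  apply (ccomp (Pf p) (x s)). apply (cpt_of_isd _ _ _ (hs_xz _ _ _ _ _ _ H s z Hs ltac:(lra))).
  apply Pf_cont; auto.
Qed.

Definition lam a p := mu a p * PI ^ 2.
Definition Gfull p (x : R -> R -> R) s := RInt (fun z => Pf p (x s z)) 0 1.
Definition Gphi p x eta s := Gp p x (-1) (2/eta) (eta/2) eta s + Gp p x 1 0 eta (1 - eta) s
  + Gp p x (2/eta - 1) (-2/eta) (1 - eta) (1 - eta/2) s.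
Definition DGphi p x xt eta s := DGp p x xt (-1) (2/eta) (eta/2) eta s + DGp p x xt 1 0 eta (1 - eta) s
  + DGp p x xt (2/eta - 1) (-2/eta) (1 - eta) (1 - eta/2) s.

Lemma mu_pos a p : 0 < a -> 2 < p -> 0 < mu a p.
Proof. intros. unfold mu. apply Rdiv_lt_0_compat; nra. Qed.


Lemma deriv_bound a p x xt xz xzz B eta s : HS a p x xt xz xzz -> 0 < s -> 0 < B ->
  (forall z, 0 <= z <= 1 -> Rabs (x s z) <= B * z * (1 - z)) ->
  0 < eta <= 1/4 -> B * eta <= 1 ->
  DGphi p x xt eta s + lam a p * Gphi p x eta s <= (a * B^2 + 4 * mu a p * B^2) * eta.
Proof.
  intros H Hs HB Hbar Heta HBe. pose proof (hs_p _ _ _ _ _ _ H) as Hp. pose proof (hs_a _ _ _ _ _ _ H) as Ha.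
  pose proof (mu_pos a p Ha Hp) as Hmu.
  set (g := fun z => Pf p (x s z)).
  assert (gL : forall z, 0 <= z <= eta -> g z <= (B*z)*(B*z)).
  { intros z Hz. unfold g. specialize (Hbar z ltac:(lra)). assert (0 <= B*z*z) by (apply Rmult_le_pos; nra).
    apply Pf_bound; auto. nra. nra. }
  assert (gR : forall z, 1 - eta <= z <= 1 -> g z <= (B*(1-z))*(B*(1-z))).
  { intros z Hz. unfold g. specialize (Hbar z ltac:(lra)). assert (0 <= B*(1-z)*(1-z)) by (apply Rmult_le_pos; nra).
    apply Pf_bound; auto. nra. nra. }
  assert (g0 : forall z, 0 <= g z) by (intros; apply Pf_nonneg).
  pose proof (piece_ineq a p x xt xz xzz (-1) (2/eta) (eta/2) eta s H Hs ltac:(lra) ltac:(lra) ltac:(lra)) as PL.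
  pose proof (piece_ineq a p x xt xz xzz 1 0 eta (1-eta) s H Hs ltac:(lra) ltac:(lra) ltac:(lra)) as PM.
  pose proof (piece_ineq a p x xt xz xzz (2/eta - 1) (-2/eta) (1-eta) (1-eta/2) s H Hs ltac:(lra) ltac:(lra) ltac:(lra)) as PR.
  assert (PL' := PL ltac:(intros z Hz; apply Rmult_le_reg_l with (eta/2); [lra|]; field_simplify; [nra|lra])).
  assert (PM' := PM ltac:(intros; lra)).
  assert (PR' := PR ltac:(intros z Hz; apply Rmult_le_reg_l with (eta/2); [lra|]; field_simplify; [nra|lra])).
  clear PL PM PR.
  assert (EB : Fp a p x xz (-1) (2/eta) s eta - Fp a p x xz (-1) (2/eta) s (eta/2)
      + (Fp a p x xz 1 0 s (1-eta) - Fp a p x xz 1 0 s eta)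
      + (Fp a p x xz (2/eta - 1) (-2/eta) s (1-eta/2) - Fp a p x xz (2/eta - 1) (-2/eta) s (1-eta))
      = 2 * a / eta * (g (eta/2) - g eta - g (1 - eta) + g (1 - eta/2))).
  { unfold Fp, g. field. lra. }
  assert (Bd : 2 * a / eta * (g (eta/2) - g eta - g (1 - eta) + g (1 - eta/2)) <= a * B^2 * eta).
  { assert (h1 := gL (eta/2) ltac:(lra)). assert (h2 := gR (1 - eta/2) ltac:(lra)).
    assert (h3 := g0 eta). assert (h4 := g0 (1-eta)).
    apply Rle_trans with (2 * a / eta * (2 * ((B * (eta/2)) * (B * (eta/2))))).
    apply Rmult_le_compat_l. apply Rlt_le, Rdiv_lt_0_compat; lra.
    replace (1 - (1 - eta/2)) with (eta/2) in h2 by ring. lra.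
    right. field. lra. }
  assert (JM : RInt (Jp a p x 0 s) eta (1 - eta) = 0).
  { transitivity (RInt (fun _ : R => 0) eta (1 - eta)).
    apply RInt_ext. intros z _. unfold Jp. change (mu a p * 0 * kk z * Pf p (x s z) = 0). ring.
    rewrite RInt_const. change ((1 - eta - eta) * 0 = 0). ring. }
  assert (JL : RInt (Jp a p x (2/eta) s) (eta/2) eta <= 2 * mu a p * B^2 * eta).
  { apply Rle_trans with ((eta - eta/2) * (mu a p * (2/eta) * (2 * B^2 * eta))).
    apply RInt_le_const. lra. apply (J_exRInt a p x xt xz xzz); auto; lra.
    intros z Hz. unfold Jp. fold (g z).
    assert (hk := kk_bound z ltac:(lra)). assert (hg := gL z ltac:(lra)). assert (hg0 := g0 z).
    assert (kk z * g z <= 2 * B^2 * eta).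
    { apply Rle_trans with (2 / z * g z). apply Rmult_le_compat_r; auto.
      apply Rle_trans with (2 / z * ((B*z)*(B*z))). apply Rmult_le_compat_l; auto.
      apply Rlt_le, Rdiv_lt_0_compat; lra.
      replace (2 / z * (B * z * (B * z))) with (2 * B^2 * z) by (field; lra). nra. }
    assert (0 < mu a p * (2 / eta)) by (apply Rmult_lt_0_compat; auto; apply Rdiv_lt_0_compat; lra).
    replace (mu a p * (2 / eta) * kk z * g z) with ((mu a p * (2 / eta)) * (kk z * g z)) by ring.
    apply Rmult_le_compat_l; lra.
    right. field. lra. }
  assert (JR : RInt (Jp a p x (-2/eta) s) (1 - eta) (1 - eta/2) <= 2 * mu a p * B^2 * eta).
  { apply Rle_trans with ((1 - eta/2 - (1 - eta)) * (mu a p * (2/eta) * (2 * B^2 * eta))).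
    apply RInt_le_const. lra. apply (J_exRInt a p x xt xz xzz); auto; lra.
    intros z Hz. unfold Jp. fold (g z).
    assert (hk := kk_bound (1 - z) ltac:(lra)). assert (hg := gR z ltac:(lra)). assert (hg0 := g0 z).
    assert (kk (1 - z) * g z <= 2 * B^2 * eta).
    { apply Rle_trans with (2 / (1 - z) * g z). apply Rmult_le_compat_r; auto.
      apply Rle_trans with (2 / (1 - z) * ((B*(1-z))*(B*(1-z)))). apply Rmult_le_compat_l; auto.
      apply Rlt_le, Rdiv_lt_0_compat; lra.
      replace (2 / (1 - z) * (B * (1 - z) * (B * (1 - z)))) with (2 * B^2 * (1 - z)) by (field; lra). nra. }
    assert (0 < mu a p * (2 / eta)) by (apply Rmult_lt_0_compat; auto; apply Rdiv_lt_0_compat; lra).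
    rewrite kk_sym.
    replace (mu a p * (-2 / eta) * - kk (1 - z) * g z) with ((mu a p * (2 / eta)) * (kk (1 - z) * g z)) by (field; lra).
    apply Rmult_le_compat_l; lra.
    right. field. lra. }
  unfold DGphi, Gphi, lam. fold g in EB.
  replace (eta / 2) with (eta/2) in * by reflexivity.
  lra.
Qed.


Lemma gfull_split a p x xt xz xzz B eta s : HS a p x xt xz xzz -> 0 < s -> 0 < B ->
  (forall z, 0 <= z <= 1 -> Rabs (x s z) <= B * z * (1 - z)) ->
  0 < eta <= 1/4 -> B * eta <= 1 ->
  Gphi p x eta s <= Gfull p x s /\ Gfull p x s <= Gphi p x eta s + 2 * eta * B^2.
Proof.
  intros H Hs HB Hbar Heta HBe. pose proof (hs_p _ _ _ _ _ _ H) as Hp.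
  set (g := fun z => Pf p (x s z)).
  assert (g0 : forall z, 0 <= g z) by (intros; apply Pf_nonneg).
  assert (gB : forall z, (0 <= z <= eta \/ 1 - eta <= z <= 1) -> g z <= B^2).
  { intros z Hz. unfold g. assert (Hz' : 0 <= z <= 1) by lra. specialize (Hbar z Hz').
    assert (0 <= B*z*(1-z)) by (apply Rmult_le_pos; nra).
    assert (Hq : B*z*(1-z) <= 1).
    { destruct Hz as [[Hz1 Hz2]|[Hz1 Hz2]].
      assert (B*z <= 1) by (apply Rle_trans with (B*eta); [apply Rmult_le_compat_l; lra | lra]).
      assert (0 <= B * z * z) by (apply Rmult_le_pos; nra). nra.
      assert (B*(1-z) <= 1) by (apply Rle_trans with (B*eta); [apply Rmult_le_compat_l; lra | lra]).
      assert (0 <= B * (1-z) * (1-z)) by (apply Rmult_le_pos; nra). nra. }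
    apply Rle_trans with ((B*z*(1-z))*(B*z*(1-z))). apply Pf_bound; auto.
    assert (0 <= B*((z-1/2)*(z-1/2))) by (apply Rmult_le_pos; nra).
    assert (B*z*(1-z) <= B * (1/4)) by nra.
    assert (B * (1/4) <= B) by lra. 
    apply Rle_trans with (B * B). apply Rmult_le_compat; lra. right; ring. }
  assert (eg : forall u v, 0 <= u -> u <= v -> v <= 1 -> ex_RInt g u v)
    by (intros; apply (g_exRInt a p x xt xz xzz); auto; lra).
  set (d := eta / 2).
  assert (E : Gfull p x s = RInt g 0 d + RInt g d eta + RInt g eta (1 - eta) + RInt g (1-eta) (1-d) + RInt g (1-d) 1).
  { unfold Gfull. fold g. unfold d.
    rewrite (Chas g 0 (eta/2) 1) by (apply eg; lra).
    rewrite (Chas g (eta/2) eta 1) by (apply eg; lra).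
    rewrite (Chas g eta (1-eta) 1) by (apply eg; lra).
    rewrite (Chas g (1-eta) (1-eta/2) 1) by (apply eg; lra). match goal with |- ?a = ?b => change (@eq R a b) end. ring. }
  assert (I1 : 0 <= RInt g 0 d <= d * B^2).
  { split. apply Rle_trans with ((d - 0) * 0). right; ring. apply RInt_ge_const. unfold d; lra. apply eg; unfold d; lra. auto.
    replace (d * B^2) with ((d - 0) * B^2) by ring. apply RInt_le_const. unfold d; lra. apply eg; unfold d; lra.
    intros z Hz. apply gB. unfold d in Hz; lra. }
  assert (I5 : 0 <= RInt g (1 - d) 1 <= d * B^2).
  { split. apply Rle_trans with ((1 - (1 - d)) * 0). right; ring. apply RInt_ge_const. unfold d; lra. apply eg; unfold d; lra. auto.
    replace (d * B^2) with ((1 - (1 - d)) * B^2) by ring. apply RInt_le_const. unfold d; lra. apply eg; unfold d; lra.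
    intros z Hz. apply gB. unfold d in Hz; lra. }
  assert (I2 : RInt g d eta <= (eta - d) * B^2).
  { apply RInt_le_const. unfold d; lra. apply eg; unfold d; lra. intros z Hz. apply gB. unfold d in Hz; lra. }
  assert (I4 : RInt g (1 - eta) (1 - d) <= (1 - d - (1 - eta)) * B^2).
  { apply RInt_le_const. unfold d; lra. apply eg; unfold d; lra. intros z Hz. apply gB. unfold d in Hz; lra. }
  assert (eL := Gp_exRInt a p x xt xz xzz (-1) (2/eta) s (eta/2) eta H Hs ltac:(lra) ltac:(lra) ltac:(lra)).
  assert (eR := Gp_exRInt a p x xt xz xzz (2/eta - 1) (-2/eta) s (1-eta) (1-eta/2) H Hs ltac:(lra) ltac:(lra) ltac:(lra)).
  assert (GL : 0 <= Gp p x (-1) (2/eta) (eta/2) eta s <= RInt g d eta).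
  { unfold Gp. split.
    apply Rle_trans with ((eta - eta/2) * 0). right; ring. apply RInt_ge_const. lra. auto.
    intros z Hz. apply Rmult_le_pos; [|apply Pf_nonneg]. apply Rmult_le_reg_l with (eta/2); [lra|]. field_simplify; [lra|lra].
    unfold d. apply RInt_le. lra. auto. apply eg; lra.
    intros z Hz. unfold g. pose proof (g0 z). unfold g in H0.
    assert (-1 + 2/eta*z <= 1). { apply Rmult_le_reg_l with (eta/2); [lra|]. field_simplify; [lra|lra]. }
    nra. }
  assert (GR : 0 <= Gp p x (2/eta - 1) (-2/eta) (1 - eta) (1 - eta/2) s <= RInt g (1 - eta) (1 - d)).
  { unfold Gp. split.
    apply Rle_trans with ((1 - eta/2 - (1 - eta)) * 0). right; ring. apply RInt_ge_const. lra. auto.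
    intros z Hz. apply Rmult_le_pos; [|apply Pf_nonneg]. apply Rmult_le_reg_l with (eta/2); [lra|]. field_simplify; [lra|lra].
    unfold d. apply RInt_le. lra. auto. apply eg; lra.
    intros z Hz. unfold g. pose proof (g0 z). unfold g in H0.
    assert (2/eta - 1 + -2/eta*z <= 1). { apply Rmult_le_reg_l with (eta/2); [lra|]. field_simplify; [lra|lra]. }
    nra. }
  assert (GM : Gp p x 1 0 eta (1 - eta) s = RInt g eta (1 - eta)).
  { unfold Gp. apply RInt_ext. intros z _. unfold g. change ((1 + 0 * z) * Pf p (x s z) = Pf p (x s z)). ring. }
  unfold Gphi. rewrite E, GM. fold d. unfold d in *. split; lra.
Qed.

Lemma Gphi_deriv a p x xt xz xzz eta s : HS a p x xt xz xzz -> 0 < s -> 0 < eta <= 1/4 ->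
  is_derive (Gphi p x eta) s (DGphi p x xt eta s).
Proof.
  intros H Hs Heta. unfold Gphi, DGphi.
  assert (D1 := piece_deriv a p x xt xz xzz (-1) (2/eta) (eta/2) eta s H Hs ltac:(lra) ltac:(lra) ltac:(lra)).
  assert (D2 := piece_deriv a p x xt xz xzz 1 0 eta (1-eta) s H Hs ltac:(lra) ltac:(lra) ltac:(lra)).
  assert (D3 := piece_deriv a p x xt xz xzz (2/eta - 1) (-2/eta) (1-eta) (1-eta/2) s H Hs ltac:(lra) ltac:(lra) ltac:(lra)).
  auto_derive. repeat split; eexists; first [exact D1 | exact D2 | exact D3].
  fix_derive. ring.
Qed.


Lemma lam_pos a p : 0 < a -> 2 < p -> 0 < lam a p.
Proof. intros. unfold lam. pose proof (mu_pos a p H H0). pose proof PI_RGT_0. 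
  apply Rmult_lt_0_compat; auto. apply pow_lt; lra. Qed.

Lemma Gfull_nonneg a p x xt xz xzz s : HS a p x xt xz xzz -> 0 <= s -> 0 <= Gfull p x s.
Proof.
  intros H Hs. unfold Gfull. apply Rle_trans with ((1 - 0) * 0). right; ring.
  apply RInt_ge_const. lra. apply (g_exRInt a p x xt xz xzz); auto; lra. intros; apply Pf_nonneg.
Qed.

Lemma energy_eta a p x xt xz xzz t1 t2 B eta : HS a p x xt xz xzz -> 0 < t1 -> t1 < t2 -> 0 < B ->
  (forall s z, t1 <= s <= t2 -> 0 <= z <= 1 -> Rabs (x s z) <= B * z * (1 - z)) ->
  0 < eta <= 1/4 -> B * eta <= 1 ->
  exp (lam a p * t2) * Gfull p x t2 <= exp (lam a p * t1) * Gfull p x t1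
    + eta * (exp (lam a p * t2) * ((a * B^2 + 4 * mu a p * B^2) * (t2 - t1) + 2 * B^2)).
Proof.
  intros H Ht1 Ht12 HB Hbar Heta HBe.
  pose proof (hs_p _ _ _ _ _ _ H) as Hp. pose proof (hs_a _ _ _ _ _ _ H) as Ha.
  pose proof (lam_pos a p Ha Hp) as Hl. pose proof (mu_pos a p Ha Hp) as Hmu.
  set (L := lam a p) in *.
  set (Hf := fun s => exp (L * s) * Gphi p x eta s).
  set (Hf' := fun s => exp (L * s) * (DGphi p x xt eta s + L * Gphi p x eta s)).
  destruct (MVT_cor2 Hf Hf' t1 t2 Ht12) as [c [Hc1 Hc2]].
  { intros c Hc. apply is_derive_Reals. unfold Hf, Hf'.
    assert (D := Gphi_deriv a p x xt xz xzz eta c H ltac:(lra) Heta).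
    auto_derive. eexists; exact D. fix_derive. ring. }
  assert (Bc := deriv_bound a p x xt xz xzz B eta c H ltac:(lra) HB (fun z Hz => Hbar c z ltac:(lra) Hz) Heta HBe).
  fold L in Bc.
  assert (Hexp : exp (L * c) <= exp (L * t2)) by (left; apply exp_increasing; nra).
  assert (C0 : 0 <= (a * B^2 + 4 * mu a p * B^2) * eta) by (apply Rmult_le_pos; nra).
  assert (Hf'c : Hf' c <= exp (L * t2) * ((a * B^2 + 4 * mu a p * B^2) * eta)).
  { unfold Hf'. apply Rle_trans with (exp (L * c) * ((a * B^2 + 4 * mu a p * B^2) * eta)).
    apply Rmult_le_compat_l. left; apply exp_pos. auto.
    apply Rmult_le_compat_r; auto. }
  destruct (gfull_split a p x xt xz xzz B eta t1 H Ht1 HB (fun z Hz => Hbar t1 z ltac:(lra) Hz) Heta HBe) as [S1 _].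
  destruct (gfull_split a p x xt xz xzz B eta t2 H ltac:(lra) HB (fun z Hz => Hbar t2 z ltac:(lra) Hz) Heta HBe) as [_ S2].
  assert (E1 : Hf t1 <= exp (L * t1) * Gfull p x t1) by (unfold Hf; apply Rmult_le_compat_l; [left; apply exp_pos | auto]).
  assert (E2 : exp (L * t2) * Gfull p x t2 <= Hf t2 + exp (L * t2) * (2 * eta * B^2)).
  { unfold Hf. rewrite <- Rmult_plus_distr_l. apply Rmult_le_compat_l; [left; apply exp_pos | auto]. }
  assert (E3 : Hf' c * (t2 - t1) <= exp (L * t2) * ((a * B^2 + 4 * mu a p * B^2) * eta) * (t2 - t1))
    by (apply Rmult_le_compat_r; lra).
  assert (Epos := exp_pos (L * t2)).
  assert (E4 : exp (L * t2) * ((a * B^2 + 4 * mu a p * B^2) * eta) * (t2 - t1) + exp (L * t2) * (2 * eta * B^2)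
     = eta * (exp (L * t2) * ((a * B^2 + 4 * mu a p * B^2) * (t2 - t1) + 2 * B^2))) by ring.
  lra.
Qed.

Lemma energy_mono a p x xt xz xzz t1 t2 : HS a p x xt xz xzz -> 0 < t1 -> t1 <= t2 ->
  exp (lam a p * t2) * Gfull p x t2 <= exp (lam a p * t1) * Gfull p x t1.
Proof.
  intros H Ht1 Ht12. destruct (Req_dec t1 t2) as [E|Hne]. subst; lra.
  assert (Hlt : t1 < t2) by lra.
  pose proof (hs_p _ _ _ _ _ _ H) as Hp. pose proof (hs_a _ _ _ _ _ _ H) as Ha.
  pose proof (mu_pos a p Ha Hp) as Hmu.
  destruct (barrier_all a p x xt xz xzz t1 t2 H Ht1 Ht12) as [B [HB Hbar]].
  set (K := exp (lam a p * t2) * ((a * B^2 + 4 * mu a p * B^2) * (t2 - t1) + 2 * B^2)).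
  assert (HK : 0 <= K).
  { unfold K. apply Rmult_le_pos. left; apply exp_pos. apply Rplus_le_le_0_compat.
    apply Rmult_le_pos; nra. nra. }
  destruct (Rle_lt_dec (exp (lam a p * t2) * Gfull p x t2) (exp (lam a p * t1) * Gfull p x t1)) as [|Hc]; auto.
  exfalso. set (D := exp (lam a p * t2) * Gfull p x t2 - exp (lam a p * t1) * Gfull p x t1).
  assert (HD : 0 < D) by (unfold D; lra).
  set (eta := Rmin (1/4) (Rmin (1/B) (D / (2 * (K + 1))))).
  assert (He1 : eta <= 1/4) by apply Rmin_l.
  assert (He2 : eta <= 1/B) by (eapply Rle_trans; [apply Rmin_r | apply Rmin_l]).
  assert (He3 : eta <= D / (2 * (K + 1))) by (eapply Rle_trans; [apply Rmin_r | apply Rmin_r]).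
  assert (He0 : 0 < eta). { unfold eta. repeat apply Rmin_pos; try lra. apply Rdiv_lt_0_compat; lra.
    apply Rdiv_lt_0_compat; lra. }
  assert (HBe : B * eta <= 1).
  { apply Rle_trans with (B * (1/B)). apply Rmult_le_compat_l; lra. right; field; lra. }
  assert (X := energy_eta a p x xt xz xzz t1 t2 B eta H Ht1 Hlt HB Hbar ltac:(lra) HBe).
  fold K in X.
  assert (eta * K <= D / 2).
  { apply Rle_trans with (D / (2 * (K + 1)) * K). apply Rmult_le_compat_r; auto.
    apply Rle_trans with (D / (2 * (K+1)) * (K + 1)). apply Rmult_le_compat_l. apply Rlt_le, Rdiv_lt_0_compat; lra. lra.
    right. field. lra. }
  unfold D in *. lra.
Qed.


Lemma Gfull_cont0 a p x xt xz xzz : HS a p x xt xz xzz -> forall eps, 0 < eps -> exists d, 0 < d /\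
  forall s, 0 <= s < d -> Gfull p x s <= Gfull p x 0 + eps.
Proof.
  intros H eps Heps. pose proof (hs_p _ _ _ _ _ _ H) as Hp.
  set (fh := fun u v => Pf p (x (Rmax 0 u) (clab 0 1 v))).
  assert (Hc : forall u v, continuity_2d_pt fh u v).
  { intros u v. unfold fh. apply (continuity_1d_2d_pt_comp (Pf p) (fun u v => x (Rmax 0 u) (clab 0 1 v))).
    apply Pf_cont; auto. apply (cont2_clamp x 0). lra. apply (hs_cont _ _ _ _ _ _ H). }
  destruct (uniform_continuity_2d_1d' fh 0 1 0 (fun z _ => Hc 0 z) (mkposreal eps Heps)) as [d Hd].
  exists d. split. apply cond_pos. intros s Hs.
  unfold Gfull. 
  apply Rle_trans with (RInt (fun z => Pf p (x 0 z) + eps) 0 1).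
  - apply RInt_le. lra. apply (g_exRInt a p x xt xz xzz); auto; lra.
    apply (ex_RInt_plus (V := R_NormedModule) (fun z => Pf p (x 0 z)) (fun _ => eps)).
    apply (g_exRInt a p x xt xz xzz); auto; lra. apply ex_RInt_const.
    intros z Hz. 
    assert (Q := Hd z 0 z s ltac:(lra) ltac:(lra) ltac:(lra) ltac:(lra) ltac:(rewrite Rminus_diag, Rabs_R0; apply cond_pos)).
    simpl in Q. unfold fh in Q. rewrite clab_id in Q by lra. rewrite !Rmax_right in Q by lra.
    apply Rabs_def2 in Q. lra.
  - rewrite RInt_add. rewrite RInt_const. change ((RInt (fun z => Pf p (x 0 z)) 0 1) + (1 - 0) * eps <= RInt (fun z => Pf p (x 0 z)) 0 1 + eps). lra.
    apply (g_exRInt a p x xt xz xzz); auto; lra. apply ex_RInt_const.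
Qed.

Lemma final_bound a p x xt xz xzz t : HS a p x xt xz xzz -> 0 <= t ->
  exp (lam a p * t) * Gfull p x t <= Gfull p x 0.
Proof.
  intros H Ht. pose proof (hs_p _ _ _ _ _ _ H) as Hp. pose proof (hs_a _ _ _ _ _ _ H) as Ha.
  pose proof (lam_pos a p Ha Hp) as Hl.
  destruct (Req_dec t 0) as [E|Hne]. subst. rewrite Rmult_0_r, exp_0. lra.
  set (A := exp (lam a p * t) * Gfull p x t). set (G0 := Gfull p x 0).
  assert (HG0 : 0 <= G0) by (apply (Gfull_nonneg a p x xt xz xzz); auto; lra).
  destruct (Rle_lt_dec A G0) as [|Hc]; auto. exfalso.
  set (eps := Rmin 1 ((A - G0) / (G0 + 3))).
  assert (He : 0 < eps) by (apply Rmin_pos; [lra | apply Rdiv_lt_0_compat; lra]).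
  assert (He1 : eps <= 1) by apply Rmin_l.
  assert (He2 : eps <= (A - G0) / (G0 + 3)) by apply Rmin_r.
  assert (Key : (1 + eps) * (G0 + eps) < A).
  { assert (eps * (G0 + 3) <= A - G0).
    { apply Rle_trans with ((A - G0) / (G0 + 3) * (G0 + 3)). apply Rmult_le_compat_r; lra. right; field; lra. }
    nra. }
  destruct (Gfull_cont0 a p x xt xz xzz H eps He) as [d1 [Hd1 Hd1']].
  assert (Hln : 0 < ln (1 + eps)) by (rewrite <- ln_1; apply ln_increasing; lra).
  set (s := Rmin t (Rmin (d1 / 2) (ln (1 + eps) / lam a p / 2))).
  assert (Hs0 : 0 < s). { unfold s. repeat apply Rmin_pos; try lra. apply Rdiv_lt_0_compat; [|lra].
    apply Rdiv_lt_0_compat; lra. }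
  assert (Hs1 : s <= t) by apply Rmin_l.
  assert (Hs2 : s <= d1 / 2) by (eapply Rle_trans; [apply Rmin_r | apply Rmin_l]).
  assert (Hs3 : s <= ln (1 + eps) / lam a p / 2) by (eapply Rle_trans; [apply Rmin_r | apply Rmin_r]).
  assert (M := energy_mono a p x xt xz xzz s t H Hs0 Hs1). fold A in M.
  assert (G1 := Hd1' s ltac:(lra)). fold G0 in G1.
  assert (Gs := Gfull_nonneg a p x xt xz xzz s H ltac:(lra)).
  assert (Ex : exp (lam a p * s) <= 1 + eps).
  { rewrite <- (exp_ln (1 + eps)) by lra. left. apply exp_increasing.
    apply Rle_lt_trans with (lam a p * (ln (1 + eps) / lam a p / 2)). apply Rmult_le_compat_l; lra.
    replace (lam a p * (ln (1 + eps) / lam a p / 2)) with (ln (1 + eps) / 2) by (field; lra). lra. }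
  assert (exp (lam a p * s) * Gfull p x s <= (1 + eps) * (G0 + eps)).
  { apply Rmult_le_compat; auto. left; apply exp_pos. }
  lra.
Qed.

Lemma RInt01_eq f : ex_RInt f 0 1 -> RInt01 f = RInt f 0 1.
Proof.
  intros Hf. unfold RInt01. destruct excluded_middle_informative as [i|n].
  - rewrite (RInt_Reals f 0 1 (epsilon i (fun _ => True))). reflexivity.
  - exfalso. apply n. constructor. apply ex_RInt_Reals_0. auto.
Qed.


Theorem mainTheorem8 (a p : R) (x : R -> R -> R) (x0 : R -> R)
  (xt xz xzz : R -> R -> R)
  (Ha : 0 < a) (Hp : 2 < p)
  (Hcont : cont2_on (fun t z => 0 <= t /\ 0 <= z <= 1) x)
  (Hxt : forall t z, 0 < t -> 0 < z < 1 -> derivable_pt_lim (fun s => x s z) t (xt t z))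
  (Hxz : forall t z, 0 < t -> 0 < z < 1 -> derivable_pt_lim (fun w => x t w) z (xz t z))
  (Hxzz : forall t z, 0 < t -> 0 < z < 1 -> derivable_pt_lim (fun w => xz t w) z (xzz t z))
  (Hcxt : cont2_on (fun t z => 0 < t /\ 0 < z < 1) xt)
  (Hcxz : cont2_on (fun t z => 0 < t /\ 0 < z < 1) xz)
  (Hcxzz : cont2_on (fun t z => 0 < t /\ 0 < z < 1) xzz)
  (HC2 : forall t, 0 <= t -> C2_01 (x t))
  (Hheat : forall t z, 0 < t -> 0 < z < 1 -> xt t z = a * xzz t z)
  (Hbc0 : forall t, 0 <= t -> x t 0 = 0)
  (Hbc1 : forall t, 0 <= t -> x t 1 = 0)
  (Hx0 : C2_01 x0)
  (Hinit : forall z, 0 <= z <= 1 -> x 0 z = x0 z) :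
  forall t, 0 <= t ->
    Lpnorm (x t) p <= exp (- (a * (p - 1) * (4 * PI ^ 2 / p ^ 2) * t)) * Lpnorm x0 p.
Proof.
  intros t Ht.
  assert (H : HS a p x xt xz xzz).
  { constructor; auto.
    - intros; apply is_derive_Reals; auto.
    - intros; apply is_derive_Reals; auto.
    - intros; apply is_derive_Reals; auto. }
  assert (eG : forall s, 0 <= s -> ex_RInt (fun z => Pf p (x s z)) 0 1)
    by (intros; apply (g_exRInt a p x xt xz xzz); auto; lra).
  assert (L1 : Lpnorm (x t) p = rpow (Gfull p x t) (1 / p)).
  { unfold Lpnorm, Gfull. f_equal. rewrite RInt01_eq.
    apply RInt_ext. intros; apply Pf_rpow; auto.
    apply (@ex_RInt_ext R_NormedModule (fun z => Pf p (x t z))). intros; symmetry; apply Pf_rpow; auto. auto. }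
  assert (L2 : Lpnorm x0 p = rpow (Gfull p x 0) (1 / p)).
  { unfold Lpnorm, Gfull. f_equal. rewrite RInt01_eq.
    apply RInt_ext. intros z Hz. rewrite Rmin_left, Rmax_right in Hz by lra.
    rewrite Pf_rpow, Hinit; auto; lra.
    apply (@ex_RInt_ext R_NormedModule (fun z => Pf p (x 0 z))). intros z Hz.
    rewrite Rmin_left, Rmax_right in Hz by lra. rewrite Pf_rpow, Hinit; auto; lra. apply eG; lra. }
  rewrite L1, L2.
  assert (F := final_bound a p x xt xz xzz t H Ht).
  assert (Gt := Gfull_nonneg a p x xt xz xzz t H Ht).
  assert (G0 := Gfull_nonneg a p x xt xz xzz 0 H ltac:(lra)).
  set (L := lam a p) in *. set (Gt' := Gfull p x t) in *. set (G0' := Gfull p x 0) in *.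
  assert (F2 : Gt' <= exp (- (L * t)) * G0').
  { apply Rmult_le_reg_l with (exp (L * t)). apply exp_pos.
    rewrite <- Rmult_assoc, <- exp_plus. replace (L * t + - (L * t)) with 0 by ring. rewrite exp_0. lra. }
  assert (EL : - (a * (p - 1) * (4 * PI ^ 2 / p ^ 2) * t) = 1 / p * - (L * t)).
  { unfold L, lam, mu. field. lra. }
  rewrite EL.
  destruct (Req_dec Gt' 0) as [E|NE].
  - rewrite E. unfold rpow at 1. destruct (Rlt_dec 0 0); [lra|].
    apply Rmult_le_pos. left; apply exp_pos. apply rpow_nonneg.
  - assert (Gpos : 0 < Gt') by lra.
    assert (G0pos : 0 < G0').
    { destruct (Rle_lt_dec G0' 0); auto. assert (0 < exp (- (L * t))) by apply exp_pos. nra. }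
    unfold rpow. destruct (Rlt_dec 0 Gt'); [|lra]. destruct (Rlt_dec 0 G0'); [|lra].
    apply Rle_trans with (Rpower (exp (- (L * t)) * G0') (1 / p)).
    apply Rle_Rpower_l. left; apply Rdiv_lt_0_compat; lra. split; auto.
    rewrite <- Rpower_mult_distr by (try apply exp_pos; auto).
    right. f_equal. unfold Rpower. rewrite ln_exp. reflexivity.
Qed.
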